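(* Let $m,k\in\mathbb{N}$, let $\beta,\mu\in\mathbb{C}$ with $\frac{\beta}{2}-m\notin\mathbb{Z}_0^-$, $\Re(\beta)>0$ and $\Re(\mu)>0$. Then \[ \int_0^\infty t^{\beta-1}e^{-\mu t}\,{}_2F_2\left[\begin{array}{r} -2m-1,\ -m-k-\tfrac{1}{2};\\ -2m-2k-1,\ \tfrac{\beta}{2}-m;\end{array}\mu t\right]_{2m+1} dt=0. \]
   Context: $\mathbb{N}=\{1,2,3,\dots\}$, $\mathbb{Z}_0^-=\{0,-1,-2,\dots\}$. For $a\in\mathbb{C}$ and $n\in\mathbb{N}_0$, $(a)_0=1$ and $(a)_n=a(a+1)\cdots(a+n-1)$. For $N\in\mathbb{N}_0$, the truncated series is ${}_2F_2\left[\begin{array}{r} a_1,a_2;\\ b_1,b_2;\end{array}z\right]_N=\sum_{n=0}^{N}\frac{(a_1)_n(a_2)_n}{(b_1)_n(b_2)_n}\frac{z^n}{n!}$ (first $N+1$ terms). The left side is the Mellin transform $\int_0^\infty t^{s-1}f(t)\,dt$ at $s=\beta$. *)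

(* Defs.v *)
From Stdlib Require Import Reals Arith Factorial.
From Coquelicot Require Import Coquelicot.
Open Scope C_scope.

Definition Cexp (z : C) : C :=
  (exp (Re z) * cos (Im z), exp (Re z) * sin (Im z))%R.

Definition Rcpow (t : R) (s : C) : C := Cexp (s * RtoC (ln t)).

Fixpoint poch (a : C) (n : nat) : C :=
  match n with
  | O => 1
  | S n' => poch a n' * (a + INR n')
  end.

Fixpoint Csum (f : nat -> C) (N : nat) : C :=
  match N with
  | O => f O
  | S N' => Csum f N' + f N
  end.

Definition F22_trunc (a1 a2 b1 b2 z : C) (N : nat) : C :=
  Csum (fun n => poch a1 n * poch a2 n / (poch b1 n * poch b2 n)
                 * Cpow z n / RtoC (INR (fact n))) N.

(* Main.v *)
Require Import Defs.
From Stdlib Require Import Reals.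
From Coquelicot Require Import Coquelicot.
From Stdlib Require Import Arith Factorial Lia Lra.
Open Scope C_scope.

Lemma Csum_ext (f g : nat -> C) (N : nat) : (forall n, (n <= N)%nat -> f n = g n) -> Csum f N = Csum g N.
Proof.
  induction N; simpl; intros H. apply H; lia.
  rewrite IHN by (intros; apply H; lia). rewrite H by lia. reflexivity.
Qed.

Lemma Csum_minus (f g : nat -> C) (N : nat) : Csum (fun n => f n - g n) N = Csum f N - Csum g N.
Proof. induction N; simpl; [reflexivity| rewrite IHN; ring]. Qed.

Lemma Csum_plus (f g : nat -> C) (N : nat) : Csum (fun n => f n + g n) N = Csum f N + Csum g N.
Proof. induction N; simpl; [reflexivity| rewrite IHN; ring]. Qed.

Lemma Csum_scal (k : C) (f : nat -> C) (N : nat) : Csum (fun n => k * f n) N = k * Csum f N.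
Proof. induction N; simpl; [reflexivity| rewrite IHN; ring]. Qed.

Lemma Csum_telescope (G : nat -> C) (N : nat) : Csum (fun n => G (S n) - G n) N = G (S N) - G O.
Proof. induction N; simpl; [reflexivity| rewrite IHN; ring]. Qed.

Lemma Csum_tail0 (f : nat -> C) (N : nat) : f (S N) = 0 -> Csum f (S N) = Csum f N.
Proof. intros H. simpl. rewrite H. ring. Qed.

Lemma poch_S a n : poch a (S n) = poch a n * (a + RtoC (INR n)).
Proof. reflexivity. Qed.

Lemma RINR_S n : RtoC (INR (S n)) = RtoC (INR n) + 1.
Proof. rewrite S_INR, RtoC_plus. reflexivity. Qed.

Lemma poch_S_l a n : poch a (S n) = a * poch (a + 1) n.
Proof.
  revert a; induction n; intros a.
  - simpl. ring.
  - rewrite poch_S, IHn, poch_S, RINR_S. ring.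
Qed.

Lemma poch_negint_0 p n : (p < n)%nat -> poch (RtoC (- INR p)) n = 0.
Proof.
  induction n; intros H. lia.
  rewrite poch_S. destruct (Nat.eq_dec p n) as [->|Hne].
  - rewrite RtoC_opp. ring.
  - rewrite IHn by lia. ring.
Qed.

Lemma poch_nz a n : (forall i, (i < n)%nat -> a + RtoC (INR i) <> 0) -> poch a n <> 0.
Proof.
  induction n; intros H.
  - exact C1_nz.
  - rewrite poch_S. apply Cmult_neq_0. apply IHn; intros; apply H; lia. apply H; lia.
Qed.

Lemma RINR_nz n : RtoC (INR (S n)) <> 0.
Proof. intros E. apply RtoC_inj in E. pose proof (pos_INR n). rewrite S_INR in E. lra. Qed.

Lemma Rfact_nz n : RtoC (INR (fact n)) <> 0.
Proof. intros E. apply RtoC_inj in E. pose proof (lt_0_INR _ (lt_O_fact n)). lra. Qed.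

Lemma RINR_lin a b m : RtoC (INR (a*m+b)) = RtoC (INR a) * RtoC (INR m) + RtoC (INR b).
Proof. rewrite plus_INR, mult_INR, RtoC_plus, RtoC_mult. reflexivity. Qed.

Lemma RINR_2 : RtoC (INR 2) = 2.
Proof. simpl. rewrite RtoC_plus. ring. Qed.
Lemma RINR_1 : RtoC (INR 1) = 1.
Proof. reflexivity. Qed.
Lemma RINR_3 : RtoC (INR 3) = 3.
Proof. simpl. rewrite !RtoC_plus. ring. Qed.

Lemma nz_scale (e e' k : C) : k <> 0 -> e = k * e' -> e' <> 0 -> e <> 0.
Proof. intros Hk -> He. apply Cmult_neq_0; assumption. Qed.

Definition Tw (m : nat) (c x : C) (n : nat) : C :=
  poch (RtoC (- INR (2*m+1))) n * poch c n / (poch (2*c) n * poch (x/2 - RtoC (INR m)) n)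
  * poch x n / RtoC (INR (fact n)).

Lemma fact_S_C n : RtoC (INR (fact (S n))) = (RtoC (INR n) + 1) * RtoC (INR (fact n)).
Proof. change (fact (S n)) with (S n * fact n)%nat. rewrite mult_INR, RtoC_mult, RINR_S. reflexivity. Qed.

Lemma Tw_step m c x n :
  (forall i, (i <= 2*m+3)%nat -> 2*c + RtoC (INR i) <> 0) ->
  (forall i, (i <= 2*m+3)%nat -> x/2 - RtoC (INR (S m)) + RtoC (INR i) <> 0) ->
  (n <= 2*m+3)%nat ->
  let mm := RtoC (INR m) in
  let u := x/2 - mm - 1 in
  let k := - 1 / ((2*mm+3)*(2*c+2*mm+2)) in
  let rho := 1 - c*x/(u*(2*c+2*mm+2)) in
  let G := fun n => k * RtoC (INR n) * (RtoC (INR n) + 2*c - 1) * Tw (S m) c x n in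
  Tw (S m) c x n - rho * Tw m c x n = G (S n) - G n.
Proof.
  intros Hc Hu Hn mm u k rho G. subst G. cbv beta.
  unfold Tw.
  assert (EA : RtoC (- INR (2 * S m + 1)) = -(2*mm+3)).
  { rewrite RtoC_opp, RINR_lin, RINR_2, RINR_1, RINR_S. subst mm. ring. }
  assert (EA2 : RtoC (- INR (2 * m + 1)) = -(2*mm+3) + 2).
  { rewrite RtoC_opp, RINR_lin, RINR_2, RINR_1. subst mm. ring. }
  assert (Eu : x/2 - RtoC (INR (S m)) = u).
  { rewrite RINR_S. subst u mm. ring. }
  assert (Eu1 : x/2 - RtoC (INR m) = u + 1).
  { subst u mm. ring. }
  rewrite EA, EA2, Eu, Eu1.
  assert (Hm : forall r : R, (0 < r)%R -> RtoC r <> 0).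
  { intros r Hr E. apply RtoC_inj in E. lra. }
  pose proof (pos_INR m) as Hm0.
  assert (H3 : 2*mm+3 <> 0).
  { replace (2*mm+3) with (RtoC (2*INR m+3)) by (subst mm; rewrite RtoC_plus, RtoC_mult; reflexivity). apply Hm. lra. }
  assert (H2 : 2*mm+2 <> 0).
  { replace (2*mm+2) with (RtoC (2*INR m+2)) by (subst mm; rewrite RtoC_plus, RtoC_mult; reflexivity). apply Hm. lra. }
  assert (H2c : 2*c+2*mm+2 <> 0).
  { replace (2*c+2*mm+2) with (2*c + RtoC (INR (2*m+2))) by (rewrite RINR_lin, RINR_2; subst mm; ring). apply Hc. lia. }
  assert (Hu0 : u <> 0).
  { replace u with (x/2 - RtoC (INR (S m)) + RtoC (INR 0)) by (rewrite RINR_S; subst u mm; simpl; ring). apply Hu. lia. }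
  set (nn := RtoC (INR n)).
  assert (Hun : u + nn <> 0).
  { replace (u+nn) with (x/2 - RtoC (INR (S m)) + RtoC (INR n)) by (rewrite RINR_S; subst u mm nn; ring). apply Hu. lia. }
  assert (H2cn : 2*c + nn <> 0) by (apply Hc; lia).
  assert (Hn1 : nn + 1 <> 0) by (subst nn; rewrite <- RINR_S; apply RINR_nz).
  assert (HP2c : poch (2*c) n <> 0).
  { apply poch_nz. intros; apply Hc; lia. }
  assert (HPu : poch u n <> 0).
  { apply poch_nz. intros i Hi. rewrite <- Eu. apply Hu; lia. }
  pose proof (Rfact_nz n) as Hf.
  set (A := -(2*mm+3)).
  assert (HA : A <> 0).
  { subst A. intros E. apply H3. replace (2*mm+3) with (-(-(2*mm+3))) by ring. rewrite E. ring. }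
  assert (HA1 : A + 1 <> 0).
  { subst A. intros E. apply H2. replace (2*mm+2) with (-(-(2*mm+3)+1)) by ring. rewrite E. ring. }
  assert (PA : poch (A+2) n = poch A n * (A+nn) * (A+nn+1) / (A*(A+1))).
  { assert (E1 : poch A n * (A+nn)*(A+nn+1) = A*((A+1)*poch (A+2) n)).
    { transitivity (poch A (S (S n))).
      - rewrite (poch_S A (S n)), (poch_S A n), RINR_S. fold nn. ring.
      - rewrite (poch_S_l A (S n)), (poch_S_l (A+1) n). replace (A+1+1) with (A+2) by ring. reflexivity. }
    rewrite E1. field. split; assumption. }
  assert (PU : poch (u+1) n = poch u n * (u+nn) / u).
  { assert (E1 := poch_S_l u n). rewrite poch_S in E1. fold nn in E1.
    rewrite E1. field. assumption. }
  rewrite !poch_S, fact_S_C, !RINR_S. fold nn.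
  rewrite PA, PU.
  subst rho k A u. clearbody nn mm.
  assert (Htwo : (2:C) <> 0) by (apply Hm; lra).
  field. cbv beta. repeat split; try assumption.
  - apply (nz_scale _ (x/2-mm-1+nn) 2); [exact Htwo | field | exact Hun].
  - apply (nz_scale _ (x/2-mm-1) 2); [exact Htwo | field | exact Hu0].
Qed.

Lemma Tw_zero_tail m c x n : (2*m+1 < n)%nat -> Tw m c x n = 0.
Proof. intros H. unfold Tw. rewrite poch_negint_0 by exact H. unfold Cdiv. ring. Qed.

Lemma neg_nz y j : y <> RtoC (- INR j) -> y + RtoC (INR j) <> 0.
Proof.
  intros H E. apply H. rewrite RtoC_opp.
  replace y with (y + RtoC (INR j) - RtoC (INR j)) by ring. rewrite E. ring.
Qed.

Lemma S_step m c x :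
  (forall i, (i <= 2*m+3)%nat -> 2*c + RtoC (INR i) <> 0) ->
  (forall i, (i <= 2*m+3)%nat -> x/2 - RtoC (INR (S m)) + RtoC (INR i) <> 0) ->
  let mm := RtoC (INR m) in
  let u := x/2 - mm - 1 in
  let rho := 1 - c*x/(u*(2*c+2*mm+2)) in
  Csum (Tw (S m) c x) (2*S m+1) = rho * Csum (Tw m c x) (2*m+1).
Proof.
  intros Hc Hu mm u rho.
  set (k := - 1 / ((2*mm+3)*(2*c+2*mm+2))).
  set (G := fun n => k * RtoC (INR n) * (RtoC (INR n) + 2*c - 1) * Tw (S m) c x n).
  assert (E : Csum (fun n => Tw (S m) c x n - rho * Tw m c x n) (2*m+3)
              = Csum (fun n => G (S n) - G n) (2*m+3)).
  { apply Csum_ext. intros n Hn. apply Tw_step; assumption. }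
  rewrite Csum_minus, Csum_scal, Csum_telescope in E.
  replace (2*m+3)%nat with (S (S (2*m+1))) in E by lia.
  rewrite (Csum_tail0 (Tw m c x) (S (2*m+1))) in E by (apply Tw_zero_tail; lia).
  rewrite (Csum_tail0 (Tw m c x) (2*m+1)) in E by (apply Tw_zero_tail; lia).
  replace (2 * S m + 1)%nat with (S (S (2*m+1))) by lia.
  assert (G0 : G O = 0). { unfold G. change (INR 0) with 0%R. ring. }
  assert (GN : G (S (S (S (2*m+1)))) = 0) by (unfold G; rewrite Tw_zero_tail by lia; ring).
  rewrite G0, GN in E.
  match type of E with ?L - ?R = _ => transitivity (L - R + R) end; [ring| rewrite E; ring].
Qed.

Lemma watson m c x :
  (forall i, (i <= 2*m+1)%nat -> 2*c + RtoC (INR i) <> 0) ->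
  (forall j, x/2 - RtoC (INR m) <> RtoC (- INR j)) ->
  Csum (Tw m c x) (2*m+1) = 0.
Proof.
  induction m; intros Hc Hx.
  - assert (H0 := Hc O ltac:(lia)). assert (H1 := Hx O).
    change (INR 0) with 0%R in H0, H1. rewrite Ropp_0 in H1.
    replace (2*0+1)%nat with 1%nat by lia.
    unfold Tw. cbn [Csum poch fact].
    change (INR 0) with 0%R. change (INR 1) with 1%R.
    assert (Hcn : c <> 0). { intros E; apply H0; rewrite E; ring. }
    assert (Hxn : x <> 0). { intros E; apply H1; rewrite E; field. }
    change (INR (2*0+1)) with 1%R. change (INR (1*1)) with 1%R. rewrite RtoC_opp. field. split; assumption.
  - rewrite S_step.
    + rewrite IHm. ring.
      * intros i Hi. apply Hc. lia.
      * intros j. specialize (Hx (S j)). intros E. apply Hx.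
        rewrite RINR_S, S_INR, Ropp_plus_distr, RtoC_plus, RtoC_opp. rewrite RtoC_opp in E.
        replace (x/2 - (RtoC (INR m) + 1)) with (x/2 - RtoC (INR m) - 1) by field. rewrite E. rewrite RtoC_opp. ring.
    + intros i Hi. apply Hc. lia.
    + intros i Hi. apply neg_nz. apply Hx.
Qed.


Lemma is_derive_val (f : R -> R) x (l l' : R) : is_derive f x l -> l = l' -> is_derive f x l'.
Proof. intros H ->. exact H. Qed.

Lemma isd_minus (f g : R -> R) x a b : is_derive f x a -> is_derive g x b -> is_derive (fun s => f s - g s)%R x (a - b)%R.
Proof. intros H1 H2. exact (is_derive_minus f g x a b H1 H2). Qed.
Lemma isd_plus (f g : R -> R) x a b : is_derive f x a -> is_derive g x b -> is_derive (fun s => f s + g s)%R x (a + b)%R.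
Proof. intros H1 H2. exact (is_derive_plus f g x a b H1 H2). Qed.

Definition Cderiv (g : R -> C) (t : R) (l : C) : Prop :=
  is_derive (fun s => fst (g s)) t (fst l) /\ is_derive (fun s => snd (g s)) t (snd l).

Lemma Cderiv_val g t l l' : Cderiv g t l -> l = l' -> Cderiv g t l'.
Proof. intros H ->. exact H. Qed.

Lemma Cderiv_const (c : C) t : Cderiv (fun _ => c) t 0.
Proof. split; apply (is_derive_const (V:=R_NormedModule)). Qed.

Lemma Cderiv_RtoC (f : R -> R) t l : is_derive f t l -> Cderiv (fun s => RtoC (f s)) t (RtoC l).
Proof. intros H. split; simpl. exact H. apply (is_derive_const (V:=R_NormedModule)). Qed.

Lemma Cderiv_plus g h t lg lh : Cderiv g t lg -> Cderiv h t lh -> Cderiv (fun s => g s + h s) t (lg + lh).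
Proof.
  intros [H1 H2] [H3 H4]. split; simpl.
  - apply (isd_plus (fun s => fst (g s)) (fun s => fst (h s))); eassumption.
  - apply (isd_plus (fun s => snd (g s)) (fun s => snd (h s))); eassumption.
Qed.

Lemma Cderiv_mult g h t lg lh : Cderiv g t lg -> Cderiv h t lh ->
  Cderiv (fun s => g s * h s) t (lg * h t + g t * lh).
Proof.
  intros [H1 H2] [H3 H4]. split; simpl.
  - eapply is_derive_val.
    apply (isd_minus (fun s => fst (g s) * fst (h s)) (fun s => snd (g s) * snd (h s)))%R.
    apply (Derive.is_derive_mult (fun s => fst (g s)) (fun s => fst (h s)));eassumption.
    apply (Derive.is_derive_mult (fun s => snd (g s)) (fun s => snd (h s))); eassumption.
    ring.
  - eapply is_derive_val.
    apply (isd_plus (fun s => fst (g s) * snd (h s)) (fun s => snd (g s) * fst (h s)))%R.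
    apply (Derive.is_derive_mult (fun s => fst (g s)) (fun s => snd (h s))); eassumption.
    apply (Derive.is_derive_mult (fun s => snd (g s)) (fun s => fst (h s))); eassumption.
    ring.
Qed.


Lemma Cderiv_exp g t l : Cderiv g t l -> Cderiv (fun s => Cexp (g s)) t (l * Cexp (g t)).
Proof.
  intros [H1 H2].
  assert (Ee : is_derive (fun s => exp (fst (g s))) t (fst l * exp (fst (g t)))%R).
  { apply (is_derive_comp exp (fun s => fst (g s))). apply is_derive_exp. exact H1. }
  assert (Ec : is_derive (fun s => cos (snd (g s))) t (snd l * - sin (snd (g t)))%R).
  { apply (is_derive_comp cos (fun s => snd (g s))). apply is_derive_cos. exact H2. }
  assert (Es : is_derive (fun s => sin (snd (g s))) t (snd l * cos (snd (g t)))%R).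
  { apply (is_derive_comp sin (fun s => snd (g s))). apply is_derive_sin. exact H2. }
  split; unfold Cexp; simpl.
  - eapply is_derive_val. apply (Derive.is_derive_mult (fun s => exp (fst (g s))) (fun s => cos (snd (g s))))%R; eassumption. unfold Re, Im. ring.
  - eapply is_derive_val. apply (Derive.is_derive_mult (fun s => exp (fst (g s))) (fun s => sin (snd (g s))))%R; eassumption. unfold Re, Im. ring.
Qed.

Lemma Cderiv_Csum (f : nat -> R -> C) (f' : nat -> C) t N :
  (forall j, (j <= N)%nat -> Cderiv (f j) t (f' j)) ->
  Cderiv (fun s => Csum (fun j => f j s) N) t (Csum f' N).
Proof.
  induction N; intros H; cbn [Csum].
  - apply H. lia.
  - apply (Cderiv_plus (fun s => Csum (fun j => f j s) N) (f (S N))). apply IHN. intros; apply H; lia. apply H; lia.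
Qed.

Lemma Cderiv_id t : Cderiv (fun s => RtoC s) t 1.
Proof. exact (Cderiv_RtoC (fun s => s) t 1%R (is_derive_id t)). Qed.

Lemma Cderiv_pow t j : Cderiv (fun s => RtoC s ^ j) t (RtoC (INR j) * RtoC t ^ (j - 1)).
Proof.
  induction j.
  - apply (Cderiv_val (fun s => RtoC s ^ 0) t 0). exact (Cderiv_const 1 t).
    change (INR 0) with 0%R. ring.
  - apply (Cderiv_val (fun s => RtoC s ^ S j) t (1 * RtoC t ^ j + RtoC t * (RtoC (INR j) * RtoC t ^ (j - 1)))).
    exact (Cderiv_mult (fun s => RtoC s) (fun s => RtoC s ^ j) t _ _ (Cderiv_id t) IHj).
    destruct j.
    + replace (1 - 1)%nat with 0%nat by lia. replace (0 - 1)%nat with 0%nat by lia.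
      cbn [Cpow]. change (INR 0) with 0%R. change (INR 1) with 1%R. ring.
    + replace (S (S j) - 1)%nat with (S j) by lia. replace (S j - 1)%nat with j by lia.
      rewrite (S_INR (S j)), RtoC_plus. cbn [Cpow]. ring.
Qed.

Lemma Cderiv_minus g h t lg lh : Cderiv g t lg -> Cderiv h t lh -> Cderiv (fun s => g s - h s) t (lg - lh).
Proof.
  intros [H1 H2] [H3 H4]. split; simpl.
  - apply (isd_minus (fun s => fst (g s)) (fun s => fst (h s))); eassumption.
  - apply (isd_minus (fun s => snd (g s)) (fun s => snd (h s))); eassumption.
Qed.

Lemma Cderiv_cmult (c : C) g t l : Cderiv g t l -> Cderiv (fun s => c * g s) t (c * l).
Proof.
  intros H. eapply Cderiv_val. apply (Cderiv_mult (fun _ => c) g t 0 l (Cderiv_const c t) H). ring.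
Qed.

Lemma Cexp_add a b : Cexp (a + b) = Cexp a * Cexp b.
Proof.
  unfold Cexp, Cmult, Cplus, Re, Im. simpl. rewrite exp_plus, cos_plus, sin_plus.
  apply injective_projections; simpl; ring.
Qed.

Lemma Cexp_RtoC r : Cexp (RtoC r) = RtoC (exp r).
Proof.
  unfold Cexp, RtoC, Re, Im. simpl. rewrite cos_0, sin_0. apply injective_projections; simpl; ring.
Qed.

Lemma Cmod_Cexp z : Cmod (Cexp z) = exp (Re z).
Proof.
  unfold Cmod, Cexp. cbn [fst snd].
  replace ((exp (Re z) * cos (Im z)) ^ 2 + (exp (Re z) * sin (Im z)) ^ 2)%R
    with (exp (Re z) ^ 2 * (sin (Im z) ^ 2 + cos (Im z) ^ 2))%R by ring.
  rewrite <- !Rsqr_pow2, sin2_cos2, Rmult_1_r. apply sqrt_Rsqr. left; apply exp_pos.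
Qed.

Definition Ephi (be mu : C) (t : R) : C := Cexp (be * RtoC (ln t) - mu * RtoC t).
Definition Qpol (d : nat -> C) (N : nat) (t : R) : C := Csum (fun j => d j * RtoC t ^ j) N.

Lemma Cderiv_Ephi be mu t : (0 < t)%R ->
  Cderiv (Ephi be mu) t ((be * RtoC (/ t) - mu) * Ephi be mu t).
Proof.
  intros Ht. unfold Ephi. apply (Cderiv_exp (fun s => be * RtoC (ln s) - mu * RtoC s)).
  eapply Cderiv_val. apply Cderiv_minus.
  apply Cderiv_cmult. apply Cderiv_RtoC. apply is_derive_ln. exact Ht.
  apply Cderiv_cmult. apply Cderiv_id. ring.
Qed.

Lemma Cderiv_Qpol d N t :
  Cderiv (Qpol d N) t (Csum (fun j => d j * (RtoC (INR j) * RtoC t ^ (j - 1))) N).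
Proof.
  unfold Qpol. apply (Cderiv_Csum (fun j s => d j * RtoC s ^ j)).
  intros j _. apply Cderiv_cmult. apply Cderiv_pow.
Qed.

Lemma XQ' d N t : RtoC t * Csum (fun j => d j * (RtoC (INR j) * RtoC t ^ (j - 1))) N
  = Csum (fun j => RtoC (INR j) * d j * RtoC t ^ j) N.
Proof.
  rewrite <- Csum_scal. apply Csum_ext. intros j _. destruct j.
  - change (INR 0) with 0%R. ring.
  - replace (S j - 1)%nat with j by lia. cbn [Cpow]. ring.
Qed.

Fixpoint dd (be mu : C) (cf : nat -> C) (j : nat) : C :=
  match j with
  | O => / be
  | S j' => (cf (S j') * mu ^ (S j') + mu * dd be mu cf j') / (be + RtoC (INR (S j')))
  end.

Lemma PI (be mu : C) (cf : nat -> C) (t : R) (M : nat) : be <> 0 -> (forall j, be + RtoC (INR j) <> 0) -> cf O = 1 ->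
  Csum (fun j => (be + RtoC (INR j)) * dd be mu cf j * RtoC t ^ j) M
  - mu * Csum (fun j => dd be mu cf j * RtoC t ^ (S j)) M
  = Csum (fun n => cf n * mu ^ n * RtoC t ^ n) M - mu * dd be mu cf M * RtoC t ^ (S M).
Proof.
  intros Hb Hbj Hc0. induction M.
  - cbn [Csum dd Cpow]. change (INR 0) with 0%R. rewrite Hc0. field. exact Hb.
  - cbn [Csum].
    transitivity ((Csum (fun j => (be + RtoC (INR j)) * dd be mu cf j * RtoC t ^ j) M
      - mu * Csum (fun j => dd be mu cf j * RtoC t ^ (S j)) M)
      + (be + RtoC (INR (S M))) * dd be mu cf (S M) * RtoC t ^ (S M)
      - mu * (dd be mu cf (S M) * RtoC t ^ (S (S M)))). ring.
    rewrite IHM.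
    assert (Hd : (be + RtoC (INR (S M))) * dd be mu cf (S M) = cf (S M) * mu ^ (S M) + mu * dd be mu cf M).
    { cbn [dd]. field. exact (Hbj (S M)). }
    rewrite Hd. cbn [Cpow]. ring.
Qed.

Lemma dd_D (be mu : C) (cf : nat -> C) (j : nat) : be <> 0 -> (forall j, be + RtoC (INR j) <> 0) -> cf O = 1 ->
  dd be mu cf j * poch be (S j) = mu ^ j * Csum (fun n => cf n * poch be n) j.
Proof.
  intros Hb Hbj Hc0. induction j.
  - cbn [dd Csum poch Cpow]. change (INR 0) with 0%R. rewrite Hc0. field. exact Hb.
  - rewrite (poch_S be (S j)).
    transitivity ((cf (S j) * mu ^ S j) * poch be (S j) + mu * (dd be mu cf j * poch be (S j))).
    { cbn [dd]. field. exact (Hbj (S j)). }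
    rewrite IHj. cbn [Csum Cpow]. ring.
Qed.

Lemma DI (be mu : C) (cf : nat -> C) (N : nat) (t : R) : (0 < t)%R -> be <> 0 -> (forall j, be + RtoC (INR j) <> 0) -> cf O = 1 ->
  dd be mu cf N = 0 ->
  (be * RtoC (/ t) - mu) * Ephi be mu t * Qpol (dd be mu cf) N t
  + Ephi be mu t * Csum (fun j => dd be mu cf j * (RtoC (INR j) * RtoC t ^ (j - 1))) N
  = Ephi be mu t * RtoC (/ t) * Csum (fun n => cf n * mu ^ n * RtoC t ^ n) N.
Proof.
  intros Ht Hb Hbj Hc0 HdN.
  pose proof (PI be mu cf t N Hb Hbj Hc0) as HP. rewrite HdN in HP.
  set (Q := Qpol (dd be mu cf) N t).
  set (Q' := Csum (fun j => dd be mu cf j * (RtoC (INR j) * RtoC t ^ (j - 1))) N).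
  assert (E1 : Csum (fun j => (be + RtoC (INR j)) * dd be mu cf j * RtoC t ^ j) N = be * Q + RtoC t * Q').
  { subst Q Q'. rewrite XQ'. unfold Qpol. rewrite <- Csum_scal, <- Csum_plus. apply Csum_ext. intros; ring. }
  assert (E2 : Csum (fun j => dd be mu cf j * RtoC t ^ (S j)) N = RtoC t * Q).
  { subst Q. unfold Qpol. rewrite <- Csum_scal. apply Csum_ext. intros; cbn [Cpow]; ring. }
  rewrite E1, E2 in HP.
  assert (Hpp : be * Q + RtoC t * Q' - mu * (RtoC t * Q) = Csum (fun n => cf n * mu ^ n * RtoC t ^ n) N)
    by (rewrite HP; ring).
  rewrite <- Hpp.
  assert (HwX : RtoC (/ t) * RtoC t = 1).
  { rewrite <- RtoC_mult, Rinv_l by lra. reflexivity. }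
  set (w := RtoC (/ t)) in *. set (X := RtoC t) in *.
  replace (Ephi be mu t * w * (be * Q + X * Q' - mu * (X * Q)))
    with (Ephi be mu t * (be * w * Q + (w * X) * Q' - mu * (w * X) * Q)) by ring.
  rewrite HwX. ring.
Qed.


Lemma lim0 (p r : R) : (0 < p)%R -> (0 <= r)%R -> forall eps, (0 < eps)%R ->
  exists delta, (0 < delta)%R /\ forall t, (0 < t < delta)%R -> (exp (p * ln t - r * t) < eps)%R.
Proof.
  intros Hp Hr eps He. exists (exp (ln eps / p)). split. apply exp_pos.
  intros t [Ht1 Ht2].
  assert (H1 : (ln t < ln eps / p)%R).
  { rewrite <- (ln_exp (ln eps / p)). apply ln_increasing; assumption. }
  assert (H2 : (p * ln t < ln eps)%R).
  { apply (Rmult_lt_compat_l p) in H1; [|exact Hp]. field_simplify in H1; lra. }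
  rewrite <- (exp_ln eps) by exact He. apply exp_increasing. nra.
Qed.

Lemma liminf (q r : R) : (0 < r)%R -> forall eps, (0 < eps)%R ->
  exists M, forall t, (M < t)%R -> (exp (q * ln t - r * t) < eps)%R.
Proof.
  intros Hr eps He.
  pose proof is_lim_div_ln_p as HL. apply is_lim_spec in HL.
  assert (Hk : (0 < r / (2 * (Rabs q + 1)))%R).
  { apply Rdiv_lt_0_compat. lra. pose proof (Rabs_pos q). lra. }
  destruct (HL (mkposreal _ Hk)) as [T1 HT1]. simpl in HT1.
  exists (Rmax T1 (Rmax 1 (- 2 * ln eps / r))). intros t Ht.
  assert (Ht1 : (T1 < t)%R) by (eapply Rle_lt_trans; [apply Rmax_l|exact Ht]).
  assert (Ht2 : (1 < t)%R) by (eapply Rle_lt_trans; [eapply Rle_trans; [apply Rmax_l|apply Rmax_r]|exact Ht]).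
  assert (Ht3 : (- 2 * ln eps / r < t)%R) by (eapply Rle_lt_trans; [eapply Rle_trans; [apply Rmax_r|apply Rmax_r]|exact Ht]).
  specialize (HT1 t Ht1). rewrite Rminus_0_r in HT1.
  assert (Hq : (q * ln t <= r * t / 2)%R).
  { assert (E : (ln t = (ln t / t) * t)%R) by (field; lra).
    rewrite E. 
    assert (A : (Rabs (ln t / t) * (Rabs q + 1) <= r / 2)%R).
    { apply Rlt_le. apply (Rmult_lt_compat_r (Rabs q + 1)) in HT1; [|pose proof (Rabs_pos q); lra].
      replace (r / (2 * (Rabs q + 1)) * (Rabs q + 1))%R with (r/2)%R in HT1 by (field; pose proof (Rabs_pos q); lra).
      exact HT1. }
    assert (B : (q * (ln t / t) <= Rabs q * Rabs (ln t / t))%R).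
    { rewrite <- Rabs_mult. apply Rle_abs. }
    pose proof (Rabs_pos (ln t / t)). pose proof (Rabs_pos q). nra. }
  assert (Hl : (q * ln t - r * t < ln eps)%R).
  { assert (- 2 * ln eps < r * t)%R as HH.
    { apply (Rmult_lt_compat_l r) in Ht3; [|exact Hr]. field_simplify in Ht3; lra. }
    lra. }
  rewrite <- (exp_ln eps) by exact He. apply exp_increasing. exact Hl.
Qed.

Lemma pow_le_one (t : R) j : (0 <= t <= 1)%R -> (t ^ j <= 1)%R.
Proof.
  intros [H1 H2]. induction j; simpl. lra.
  pose proof (pow_le t j H1). nra.
Qed.

Lemma Cmod_term (d : C) (t : R) j : (0 <= t)%R -> Cmod (d * RtoC t ^ j) = (Cmod d * t ^ j)%R.
Proof. intros Ht. rewrite Cmod_mult, Cmod_pow, Cmod_R, Rabs_pos_eq by exact Ht. reflexivity. Qed.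

Lemma Qb (d : nat -> C) M t : (0 <= t)%R -> (Cmod (Qpol d M t) <= sum_f_R0 (fun j => Cmod (d j) * t ^ j) M)%R.
Proof.
  intros Ht. unfold Qpol. induction M.
  - cbn [Csum sum_f_R0]. rewrite Cmod_term by exact Ht. lra.
  - cbn [Csum]. change (sum_f_R0 ?f (S M)) with (sum_f_R0 f M + f (S M))%R. cbv beta.
    eapply Rle_trans. apply Cmod_triangle.
    rewrite Cmod_term by exact Ht. lra.
Qed.

Lemma Cmod_Ephi be mu t : Cmod (Ephi be mu t) = exp (Re be * ln t - Re mu * t)%R.
Proof. unfold Ephi. rewrite Cmod_Cexp. f_equal. unfold Re. simpl. ring. Qed.

Lemma Fsmall0 be mu d N : (0 < Re be)%R -> (0 < Re mu)%R -> forall eps, (0 < eps)%R ->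
  exists delta, (0 < delta)%R /\ forall t, (0 < t < delta)%R -> (Cmod (Ephi be mu t * Qpol d N t) < eps)%R.
Proof.
  intros Hb Hm eps He.
  set (K := sum_f_R0 (fun j => Cmod (d j)) N).
  assert (HK : (0 <= K)%R) by (apply cond_pos_sum; intros; apply Cmod_ge_0).
  destruct (lim0 (Re be) (Re mu) Hb (Rlt_le _ _ Hm) (eps / (K + 1))) as [d0 [Hd0 Hd]].
  { apply Rdiv_lt_0_compat; lra. }
  exists (Rmin d0 1). split. apply Rmin_pos; lra.
  intros t [Ht1 Ht2].
  assert (Ht3 : (t < d0)%R) by (eapply Rlt_le_trans; [exact Ht2| apply Rmin_l]).
  assert (Ht4 : (t <= 1)%R) by (left; eapply Rlt_le_trans; [exact Ht2| apply Rmin_r]).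
  specialize (Hd t (conj Ht1 Ht3)).
  rewrite Cmod_mult, Cmod_Ephi.
  assert (HQ : (Cmod (Qpol d N t) <= K)%R).
  { eapply Rle_trans. apply Qb. lra. apply sum_Rle. intros j _.
    pose proof (pow_le_one t j (conj (Rlt_le _ _ Ht1) Ht4)). pose proof (Cmod_ge_0 (d j)).
    pose proof (pow_le t j (Rlt_le _ _ Ht1)). nra. }
  pose proof (exp_pos (Re be * ln t - Re mu * t)).
  pose proof (Cmod_ge_0 (Qpol d N t)).
  assert (E : (eps / (K + 1) * (K + 1) = eps)%R) by (field; lra).
  nra.
Qed.

Lemma FsmallInf be mu d N : (0 < Re mu)%R -> forall eps, (0 < eps)%R ->
  exists M, forall t, (M < t)%R -> (Cmod (Ephi be mu t * Qpol d N t) < eps)%R.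
Proof.
  intros Hm eps He.
  set (K := sum_f_R0 (fun j => Cmod (d j)) N).
  assert (HK : (0 <= K)%R) by (apply cond_pos_sum; intros; apply Cmod_ge_0).
  destruct (liminf (Re be + INR N) (Re mu) Hm (eps / (K + 1))) as [M0 HM0].
  { apply Rdiv_lt_0_compat; lra. }
  exists (Rmax M0 1). intros t Ht.
  assert (Ht1 : (M0 < t)%R) by (eapply Rle_lt_trans; [apply Rmax_l|exact Ht]).
  assert (Ht2 : (1 < t)%R) by (eapply Rle_lt_trans; [apply Rmax_r|exact Ht]).
  specialize (HM0 t Ht1).
  rewrite Cmod_mult, Cmod_Ephi.
  assert (HQ : (Cmod (Qpol d N t) <= K * t ^ N)%R).
  { eapply Rle_trans. apply Qb. lra. unfold K. rewrite Rmult_comm, scal_sum. apply sum_Rle. intros j Hj.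
    pose proof (Rle_pow t j N (Rlt_le _ _ Ht2) Hj). pose proof (Cmod_ge_0 (d j)). nra. }
  assert (Ep : (exp (Re be * ln t - Re mu * t) * t ^ N = exp ((Re be + INR N) * ln t - Re mu * t))%R).
  { rewrite <- (Rpower_pow N t) by lra. unfold Rpower. rewrite <- exp_plus. f_equal. ring. }
  pose proof (exp_pos (Re be * ln t - Re mu * t)).
  pose proof (exp_pos ((Re be + INR N) * ln t - Re mu * t)).
  pose proof (Cmod_ge_0 (Qpol d N t)).
  assert (E : (eps / (K + 1) * (K + 1) = eps)%R) by (field; lra).
  assert (HQ2 : (exp (Re be * ln t - Re mu * t) * Cmod (Qpol d N t) <= exp ((Re be + INR N) * ln t - Re mu * t) * K)%R).
  { rewrite <- Ep. nra. }
  nra.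
Qed.


Lemma Cball0 (z : C) (eps : posreal) : (Cmod z < eps)%R -> ball (0:C) eps z.
Proof.
  intros H. pose proof (Rmax_Cmod z) as Hm.
  pose proof (Rmax_l (Rabs (fst z)) (Rabs (snd z))). pose proof (Rmax_r (Rabs (fst z)) (Rabs (snd z))).
  split; unfold ball; simpl; unfold AbsRing_ball, abs, minus, plus, opp; simpl;
    rewrite Ropp_0, Rplus_0_r; lra.
Qed.

Lemma Re_pos_nz z : (0 < Re z)%R -> z <> 0.
Proof. intros H E. rewrite E in H. simpl in H. lra. Qed.

Lemma Cderiv_cont g t l : Cderiv g t l ->
  continuous (fun s => fst (g s)) t /\ continuous (fun s => snd (g s)) t.
Proof.
  intros [H1 H2]. split; apply (ex_derive_continuous (K:=R_AbsRing) (V:=R_NormedModule)); eexists; eassumption.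
Qed.

Theorem mainTheorem18 (m k : nat) (beta mu : C) :
  (1 <= m)%nat -> (1 <= k)%nat ->
  (forall j : nat, beta / 2 - RtoC (INR m) <> RtoC (- INR j)%R) ->
  (0 < Re beta)%R -> (0 < Re mu)%R ->
  is_RInt_gen
    (fun t : R =>
       Rcpow t (beta - 1) * Cexp (- (mu * RtoC t)) *
       F22_trunc (RtoC (- INR (2 * m + 1)))
                 (RtoC (- INR m - INR k - / 2)%R)
                 (RtoC (- INR (2 * m + 2 * k + 1)))
                 (beta / 2 - RtoC (INR m))
                 (mu * RtoC t) (2 * m + 1))
    (at_right 0) (Rbar_locally p_infty) (RtoC 0).
Proof.
  intros Hm Hk Hx Hb Hmu.
  match goal with |- is_RInt_gen ?f _ _ _ => set (integ := f) end.
  set (a2 := RtoC (- INR m - INR k - / 2)%R).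
  assert (Hb1 : RtoC (- INR (2 * m + 2 * k + 1)) = 2 * a2).
  { unfold a2. rewrite <- RtoC_mult. f_equal. rewrite !plus_INR, !mult_INR.
    replace (INR 2) with 2%R by (simpl; ring). change (INR 1) with 1%R. field. }
  set (N := (2*m+1)%nat).
  set (cf := fun n => poch (RtoC (- INR (2 * m + 1))) n * poch a2 n
                       / (poch (2 * a2) n * poch (beta / 2 - RtoC (INR m)) n) / RtoC (INR (fact n))).
  assert (Hbnz : beta <> 0) by (apply Re_pos_nz; exact Hb).
  assert (Hbj : forall j, beta + RtoC (INR j) <> 0).
  { intros j. apply Re_pos_nz. unfold Re, Cplus, RtoC. simpl. pose proof (pos_INR j). unfold Re in Hb. lra. }
  assert (Hc0 : cf O = 1).
  { unfold cf. cbn [poch fact]. change (INR 1) with 1%R. field. }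
  assert (Hsum : Csum (fun n => cf n * poch beta n) N = 0).
  { rewrite <- (watson m a2 beta).
    - apply Csum_ext. intros n _. unfold cf, Tw. unfold Cdiv. ring.
    - intros i Hi. rewrite <- Hb1, <- RtoC_plus. intros E. apply RtoC_inj in E.
      assert (INR i < INR (2 * m + 2 * k + 1))%R by (apply lt_INR; lia). lra.
    - exact Hx. }
  assert (HdN : dd beta mu cf N = 0).
  { pose proof (dd_D beta mu cf N Hbnz Hbj Hc0) as H. rewrite Hsum, Cmult_0_r in H.
    assert (Hp : poch beta (S N) <> 0) by (apply poch_nz; intros; apply Hbj).
    replace (dd beta mu cf N) with (dd beta mu cf N * poch beta (S N) / poch beta (S N)) by (field; exact Hp).
    rewrite H. unfold Cdiv. ring. }
  set (F := fun t => Ephi beta mu t * Qpol (dd beta mu cf) N t).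
  set (g := fun t => Ephi beta mu t * RtoC (/ t) * Csum (fun n => cf n * mu ^ n * RtoC t ^ n) N).
  assert (HFg : forall t, (0 < t)%R -> Cderiv F t (g t)).
  { intros t Ht. unfold F, g.
    eapply Cderiv_val.
    apply (Cderiv_mult (Ephi beta mu) (Qpol (dd beta mu cf) N)). apply Cderiv_Ephi; exact Ht. apply Cderiv_Qpol.
    apply DI; assumption. }
  assert (Hgd : forall t, (0 < t)%R -> exists l, Cderiv g t l).
  { intros t Ht. eexists. unfold g.
    apply Cderiv_mult. apply Cderiv_mult. apply Cderiv_Ephi; exact Ht.
    apply Cderiv_RtoC. exact (is_derive_inv (fun y => y) t 1%R (is_derive_id t) ltac:(lra)).
    apply (Cderiv_Csum (fun n s => cf n * mu ^ n * RtoC s ^ n)). intros j _.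
    apply Cderiv_cmult. apply Cderiv_pow. }
  assert (Hfg : forall t, (0 < t)%R -> integ t = g t).
  { intros t Ht. unfold integ, g. fold a2.
    assert (P : F22_trunc (RtoC (- INR (2 * m + 1))) a2 (RtoC (- INR (2 * m + 2 * k + 1)))
                  (beta / 2 - RtoC (INR m)) (mu * RtoC t) (2 * m + 1)
                = Csum (fun n => cf n * mu ^ n * RtoC t ^ n) N).
    { unfold F22_trunc. apply Csum_ext. intros n _. rewrite Cpow_mult_l, Hb1. unfold cf, Cdiv. ring. }
    rewrite P. f_equal.
    unfold Rcpow, Ephi. rewrite <- Cexp_add.
    replace (RtoC (/ t)) with (Cexp (RtoC (- ln t))) by (rewrite Cexp_RtoC, exp_Ropp, exp_ln; [reflexivity | lra]).
    rewrite <- Cexp_add. f_equal. rewrite RtoC_opp. ring. }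
  assert (HI : forall a b, (0 < a)%R -> (0 < b)%R -> is_RInt integ a b (F b - F a)).
  { intros a b Ha Hb'.
    pose proof (Rmin_pos a b Ha Hb') as Hmin.
    apply (is_RInt_ext g). { intros x Hx0. symmetry. apply Hfg. lra. }
    assert (H1 : is_RInt (fun t => fst (g t)) a b (minus (fst (F b)) (fst (F a)))).
    { apply (is_RInt_derive (fun t => fst (F t)) (fun t => fst (g t))).
      - intros x Hx0. apply (HFg x). lra.
      - intros x Hx0. destruct (Hgd x ltac:(lra)) as [l Hl]. apply (Cderiv_cont g x l Hl). }
    assert (H2 : is_RInt (fun t => snd (g t)) a b (minus (snd (F b)) (snd (F a)))).
    { apply (is_RInt_derive (fun t => snd (F t)) (fun t => snd (g t))).
      - intros x Hx0. apply (HFg x). lra.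
      - intros x Hx0. destruct (Hgd x ltac:(lra)) as [l Hl]. apply (Cderiv_cont g x l Hl). }
    exact (is_RInt_fct_extend_pair g a b _ _ H1 H2). }
  unfold is_RInt_gen. apply filterlimi_locally. intros eps.
  pose proof (cond_pos eps) as Heps.
  destruct (Fsmall0 beta mu (dd beta mu cf) N Hb Hmu (eps/2)) as [dl [Hdl H0]]. lra.
  destruct (FsmallInf beta mu (dd beta mu cf) N Hmu (eps/2)) as [M HM]. lra.
  apply (Filter_prod _ _ _ (fun a => 0 < a < dl)%R (fun b => Rmax M 0 < b)%R).
  - exists (mkposreal dl Hdl). intros y Hy Hy0. split. exact Hy0.
    unfold ball in Hy; simpl in Hy; unfold AbsRing_ball, abs, minus, plus, opp in Hy; simpl in Hy.
    rewrite Ropp_0, Rplus_0_r, Rabs_pos_eq in Hy by lra. exact Hy.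
  - exists (Rmax M 0). intros; assumption.
  - intros a b [Ha1 Ha2] Hb2. simpl.
    assert (HbM : (M < b)%R) by (eapply Rle_lt_trans; [apply Rmax_l| exact Hb2]).
    assert (Hb0 : (0 < b)%R) by (eapply Rle_lt_trans; [apply Rmax_r| exact Hb2]).
    exists (F b - F a). split. apply HI; assumption.
    apply Cball0. unfold Cminus. eapply Rle_lt_trans. apply Cmod_triangle. rewrite Cmod_opp.
    specialize (H0 a (conj Ha1 Ha2)). specialize (HM b HbM). unfold F. lra.
Qed.
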